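(* Let $n$ be an odd positive integer and let $\mathcal{B}$ be a balanced bipartite graph on $2n$ vertices with parts $V_1$ and $V_2$ such that $\delta(\mathcal{B})\geq\frac{n}{2}+1$. Let $S\subseteq V(\mathcal{B})$ with $|S|=n+1$. Then $\mathcal{B}[S]$ is a forest if and only if $\min\{|S\cap V_1|,|S\cap V_2|\}=1$.
   Context: All graphs are finite and simple. A balanced bipartite graph on $2n$ vertices is a bipartite graph with a given bipartition $(V_1,V_2)$ where $|V_1|=|V_2|=n$. $\delta(G)$ denotes the minimum degree of $G$, and $G[S]$ the subgraph induced by $S\subseteq V(G)$. *)

(* Defs.v *)
From mathcomp Require Import all_boot.
Set Implicit Arguments. Unset Strict Implicit. Unset Printing Implicit Defensive.

Definition simple_graph (T : finType) (e : rel T) : Prop :=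
  symmetric e /\ irreflexive e.

Definition deg (T : finType) (e : rel T) (v : T) : nat := #|[set u | e v u]|.

Definition balanced_bipartite (T : finType) (e : rel T) (V1 V2 : {set T}) (n : nat) : Prop :=
  [/\ simple_graph e,
      V1 :&: V2 = set0 /\ V1 :|: V2 = [set: T],
      #|V1| = n, #|V2| = n &
      (forall u v, e u v -> (u \in V1 /\ v \in V2) \/ (u \in V2 /\ v \in V1))].

(* minimum degree delta(G) >= n/2 + 1, stated without division: 2 deg >= n + 2 *)
Definition min_degree_ge_half_plus_one (T : finType) (e : rel T) (n : nat) : Prop :=
  forall v : T, n + 2 <= 2 * deg e v.

Definition has_cycle_in (T : finType) (e : rel T) (S : {set T}) : Prop :=
  exists c : seq T, [/\ 2 < size c, {subset c <= S} & ucycle e c].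

Definition induced_forest (T : finType) (e : rel T) (S : {set T}) : Prop :=
  ~ has_cycle_in e S.

(* Main.v *)
Require Import Defs.
From mathcomp Require Import all_boot.
From mathcomp Require Import zify.
Set Implicit Arguments. Unset Strict Implicit. Unset Printing Implicit Defensive.

Section G.
Variables (T : finType) (e : rel T).
Hypothesis esymm : symmetric e.
Hypothesis eirr : irreflexive e.

Definition bipW (W : {set T}) := forall u v, e u v -> (u \in W) = (v \notin W).

Lemma star (W S : {set T}) : bipW W -> #|S :&: W| <= 1 -> ~ has_cycle_in e S.
Proof.
move=> bip hW [c [hsz hsub /andP [hcyc huniq]]].
have [v vc vW] : exists2 v, v \in c & v \notin W.
  case: c hsz hsub hcyc huniq => [|c0 [|c1 r]] //= _ _ /andP [h01 _] _.
  case: (boolP (c0 \in W)) => h0.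
  - exists c1; first by rewrite !inE eqxx orbT.
    by rewrite -(bip _ _ h01).
  - by exists c0 => //; rewrite inE eqxx.
case: (rot_to vc) => i s hrot.
have hc' : cycle e (v :: s) by rewrite -hrot rot_cycle.
have hu' : uniq (v :: s) by rewrite -hrot rot_uniq.
have hs' : 2 < size (v :: s) by rewrite -hrot size_rot.
have hsub' : {subset v :: s <= S} by move=> x; rewrite -hrot mem_rot; apply: hsub.
clear hrot; case: s hc' hu' hs' hsub' => [|a [|b s]] //= hc' hu' _ hsub'.
move: hc' => /= /andP [hva /andP [_]]; rewrite rcons_path => /andP [_ hlv].
set l := last b s in hlv.
have aW : a \in W.
  by have := bip _ _ hva; rewrite (negbTE vW) => /esym /negbFE.
have lW : l \in W by rewrite (bip _ _ hlv) vW.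
have aS : a \in S by apply: hsub'; rewrite !inE eqxx orbT.
have lS : l \in S.
  apply: hsub'; have := mem_last b s; rewrite -/l => hl.
  by rewrite inE (_ : l \in [:: a, b & s]) ?orbT // inE hl orbT.
have hal : a = l.
  apply/eqP; apply: contraLR hW; rewrite -ltnNge => hne.
  have := subset_leq_card (_ : [set a; l] \subset S :&: W).
  rewrite cards2 hne; apply.
  by apply/subsetP => x; rewrite !inE => /orP [] /eqP ->; rewrite ?aS ?aW ?lS ?lW.
move: hu' => /andP [_ /andP [ha _]].
by move: ha; rewrite hal mem_last.
Qed.

Lemma leaf (S : {set T}) : ~ has_cycle_in e S -> S != set0 ->
  exists2 v, v \in S & #|[set u in S | e v u]| <= 1.
Proof.
move=> hnc /set0Pn [x0 xS].
suff H : forall k x p, #|T| - size p <= k -> path e x p -> uniq (x :: p) ->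
    {subset x :: p <= S} -> exists2 v, v \in S & #|[set u in S | e v u]| <= 1.
  apply: (H #|T| x0 [::]) => //=; first by rewrite subn0.
  by move=> y; rewrite inE => /eqP ->.
elim=> [|k IH] x p hk hp hu hs.
  have : size (x :: p) <= #|T| by rewrite -(card_uniqP hu) max_card.
  move: hk => /=; lia.
case: (leqP #|[set u in S | e x u]| 1) => hdeg.
  by exists x => //; apply: hs; rewrite inE eqxx.
have : ~~ ([set u in S | e x u] \subset [set head x p]).
  apply/negP => sub; have := subset_leq_card sub; rewrite cards1; lia.
case/subsetPn => y; rewrite !inE => /andP [yS exy] ynh.
case: (boolP (y \in x :: p)) => yin; last first.
  apply: (IH y (x :: p)) => //=.
  - by rewrite subnS; move: hk; case: (#|T| - size p).
  - by rewrite esymm exy hp.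
  - by rewrite yin.
  - by move=> z; rewrite inE => /orP [/eqP -> //|]; apply: hs.
have yx : y != x by apply: contraTneq exy => ->; rewrite eirr.
move: yin; rewrite inE (negbTE yx) /=.
case: p hk hp hu hs ynh => [//|h p'] hk hp hu hs /= ynh.
rewrite inE (negbTE ynh) /= => yp'.
exfalso; apply: hnc.
set j := index y p'.
have hj : j < size p' by rewrite index_mem.
have htk : take j.+1 p' = rcons (take j p') y by rewrite (take_nth y hj) nth_index.
exists (x :: h :: rcons (take j p') y); split.
- by rewrite /= size_rcons.
- move=> z; rewrite -htk !inE => /orP [/eqP ->|/orP [/eqP ->|/mem_take hz]];
    apply: hs; by rewrite !inE ?eqxx ?hz ?orbT.
- apply/andP; split.
  + rewrite /cycle rcons_path; apply/andP; split.
    * have := take_path j.+2 hp; rewrite /= htk; by [].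
    * by rewrite /= last_rcons esymm.
  + rewrite -htk.
    move: hu => /= /andP [hx /andP [hh hu']].
    rewrite (take_uniq _ hu') andbT.
    apply/andP; split.
    * rewrite inE negb_or; move: hx; rewrite inE negb_or => /andP [-> hx] /=.
      by apply: contra hx => /mem_take.
    * by apply: contra hh => /mem_take.
Qed.

Definition Ecount (W S : {set T}) := \sum_(u in S :&: W) #|[set v in S | e u v]|.

Lemma sum_bool (A : {set T}) (P : pred T) :
  \sum_(u in A) (P u : nat) = #|[set u in A | P u]|.
Proof.
rewrite -sum1_card [RHS](eq_bigl (fun u => (u \in A) && P u)); last by move=> u; rewrite inE.
rewrite big_mkcondr /=; apply: eq_bigr => u _; by case: (P u).
Qed.

Lemma nbr_split (S : {set T}) v u : v \in S ->
  #|[set w in S | e u w]| = e u v + #|[set w in S :\ v | e u w]|.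
Proof.
move=> vS; rewrite (cardsD1 v) inE vS /=; congr (_ + _).
by apply: eq_card => w; rewrite !inE andbA.
Qed.

Lemma forest_edges W S : bipW W -> ~ has_cycle_in e S -> S != set0 ->
  Ecount W S < #|S|.
Proof.
move=> bip hnc hne; move: (leqnn #|S|); move: {2}#|S| => m.
elim: m S hnc hne => [|m IH] S hnc hne hS.
  by move: hne; rewrite -card_gt0; lia.
have [v vS hv] := leaf hnc hne.
set S' := S :\ v.
have hnc' : ~ has_cycle_in e S'.
  move=> [c [h1 h2 h3]]; apply: hnc; exists c; split => // z /h2.
  by rewrite inE => /andP [].
have hNsub : #|[set u in S | e v u]| <= #|S'|.
  apply: subset_leq_card; apply/subsetP => u; rewrite !inE => /andP [-> evu].
  by rewrite andbT; apply: contraTneq evu => ->; rewrite eirr.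
have hcS : #|S| = #|S'|.+1 by rewrite (cardsD1 v) vS.
have key : Ecount W S <= Ecount W S' + #|[set u in S | e v u]|.
  rewrite /Ecount; case: (boolP (v \in W)) => vW.
  - rewrite (bigD1 v) /=; last by rewrite inE vS vW.
    rewrite addnC leq_add2r.
    rewrite (eq_bigl (fun u => u \in S' :&: W)); last first.
      by move=> u; rewrite !inE; case: (u == v); case: (u \in S); case: (u \in W).
    apply: leq_sum => u; rewrite !inE => /andP [/andP [_ uS] uW].
    rewrite (nbr_split u vS).
    have -> : e u v = false.
      by apply/negP => euv; have := bip _ _ euv; rewrite uW vW.
    by [].
  - rewrite (eq_bigl (fun u => u \in S' :&: W)); last first.
      move=> u; rewrite !inE; case: eqP => // ->; by rewrite (negbTE vW) andbF.
    apply: (@leq_trans (\sum_(u in S' :&: W) (e u v + #|[set w in S' | e u w]|))).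
      by apply: leq_sum => u _; rewrite (nbr_split u vS).
    rewrite big_split /= addnC leq_add2l.
    rewrite (sum_bool _ (fun i => e i v)); apply: subset_leq_card; apply/subsetP => u.
    by rewrite !inE esymm => /andP [/andP [/andP [_ ->] _] ->].
case: (boolP (S' == set0)) => h0.
  move/eqP: h0 => h0; move: key hNsub; rewrite h0 cards0 hcS.
  by rewrite /Ecount set0I big_set0; lia.
have := IH S' hnc' h0 (_ : #|S'| <= m).
by move: hS hcS key hv; lia.
Qed.

End G.

Lemma lower (T : finType) (e : rel T) (W W' S : {set T}) (n : nat) :
  odd n -> #|W'| = n -> (forall u v, e u v -> u \in W -> v \in W') ->
  min_degree_ge_half_plus_one e n ->
  #|S :&: W| + #|S :&: W'| = n.+1 -> 2 <= #|S :&: W| -> 2 * #|S :&: W| <= n.+1 ->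
  n.+1 <= Ecount e W S.
Proof.
move=> hodd hW' hWW' hdeg hab ha2 hale.
set a := #|S :&: W| in hab ha2 hale *.
set b := #|S :&: W'| in hab.
have hn : n = (n./2).*2.+1 by rewrite -[LHS]odd_double_half hodd add1n.
rewrite -muln2 in hn.
have hu : forall u, u \in S :&: W -> n + 5 <= 2 * #|[set v in S | e u v]| + 2 * a.
  move=> u; rewrite inE => /andP [uS uW].
  set N := [set x | e u x].
  have h1 : #|N :&: S| + #|N :\: S| = deg e u := cardsID S N.
  have h2 : #|N :\: S| <= #|W' :\: S|.
    apply: subset_leq_card; apply/subsetP => x; rewrite !inE => /andP [-> exu] /=.
    exact: hWW' _ _ exu uW.
  have h3 : #|W' :&: S| + #|W' :\: S| = n by rewrite cardsID.
  have h4 : #|W' :&: S| = b by rewrite setIC.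
  have h5 : #|N :&: S| = #|[set v in S | e u v]|.
    by apply: eq_card => x; rewrite !inE andbC.
  have := hdeg u; lia.
have : a * (n + 5 - 2 * a) <= 2 * Ecount e W S.
  rewrite /Ecount big_distrr /= /a -sum_nat_const.
  apply: leq_sum => u hu'; have := hu u hu'; lia.
nia.
Qed.

Theorem corollary2p5 (T : finType) (e : rel T) (V1 V2 : {set T}) (n : nat)
  (hodd : odd n)
  (hB : balanced_bipartite e V1 V2 n)
  (hdeg : min_degree_ge_half_plus_one e n)
  (S : {set T}) (hS : #|S| = n.+1) :
  induced_forest e S <-> minn #|S :&: V1| #|S :&: V2| = 1.
Proof.
case: hB => [[hs hi] [hdisj hU] h1 h2 hedge].
have notboth : forall x, x \in V1 -> x \in V2 -> False.
  move=> x x1 x2; have : x \in V1 :&: V2 by rewrite inE x1 x2.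
  by rewrite hdisj inE.
have bip1 : bipW e V1.
  move=> u v /hedge [[uV vV]|[uV vV]].
  - by rewrite uV; apply/esym/negP => /notboth; apply.
  - by rewrite vV /=; apply/negP => /notboth; apply.
have bip2 : bipW e V2.
  move=> u v /hedge [[uV vV]|[uV vV]].
  - by rewrite vV /=; apply/negP => /notboth; apply.
  - by rewrite uV; apply/esym/negP => /notboth; apply.
have hab : #|S :&: V1| + #|S :&: V2| = n.+1.
  have := cardsUI (S :&: V1) (S :&: V2).
  rewrite -setIUr hU setIT setIACA setIid hdisj setI0 cards0 addn0 hS.
  by move->.
have ha : #|S :&: V1| <= n by rewrite -h1; apply/subset_leq_card/subsetIr.
have hb : #|S :&: V2| <= n by rewrite -h2; apply/subset_leq_card/subsetIr.
have h12 : forall u v, e u v -> u \in V1 -> v \in V2.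
  move=> u v euv uV; case: (hedge _ _ euv) => [[]//|[uV2 vV]].
  by case: (notboth _ uV uV2).
have h21 : forall u v, e u v -> u \in V2 -> v \in V1.
  move=> u v euv uV; case: (hedge _ _ euv) => [[uV1 vV]|[]//].
  by case: (notboth _ uV1 uV).
have hne : S != set0 by rewrite -card_gt0 hS.
split.
- move=> hf.
  have : ~ (2 <= #|S :&: V1| /\ 2 <= #|S :&: V2|).
    move=> [ha2 hb2].
    case: (leqP (2 * #|S :&: V1|) n.+1) => hle.
    + have := lower hodd h2 h12 hdeg hab ha2 hle.
      have := forest_edges hs hi bip1 hf hne.
      rewrite hS; lia.
    + have hle' : 2 * #|S :&: V2| <= n.+1 by lia.
      have hba : #|S :&: V2| + #|S :&: V1| = n.+1 by rewrite addnC.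
      have := lower hodd h1 h21 hdeg hba hb2 hle'.
      have := forest_edges hs hi bip2 hf hne.
      rewrite hS; lia.
  lia.
- move=> hm.
  have [ha1|hb1] : #|S :&: V1| <= 1 \/ #|S :&: V2| <= 1 by lia.
  + by rewrite /induced_forest; apply: (star bip1 ha1).
  + by rewrite /induced_forest; apply: (star bip2 hb1).
Qed.
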